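(* Let $\alpha,\beta\in\{-1,0,1\}$, and let $\tilde{C}\in\{0,1\}^{\tilde{K}\times n}$ and $\hat{C}\in\{0,1\}^{\hat{K}\times n}$ be cost matrices of two ordinal objectives on the same $n$ elements. Then the matrix \[ A=\begin{pmatrix}\alpha\,\tilde{C}\\ \mathbf{1}^\top\\ \beta\,\hat{C}\end{pmatrix}, \] where $\mathbf{1}\in\mathbb{R}^n$ is the all-ones vector, is totally unimodular.
   Context: An ordinal objective on $n$ elements with $K$ categories $\eta_1\prec\dots\prec\eta_K$ is given by an assignment $o:\{1,\dots,n\}\to\{\eta_1,\dots,\eta_K\}$; its cost matrix $C\in\{0,1\}^{K\times n}$ has $C_{ji}=1$ if $j\le k$ where $o(i)=\eta_k$, and $C_{ji}=0$ otherwise. $\tilde{C}$ and $\hat{C}$ are such matrices for assignments $\tilde{o}$ (with $\tilde{K}$ categories) and $\hat{o}$ (with $\hat{K}$ categories). A matrix is totally unimodular if every square submatrix has determinant in $\{-1,0,1\}$. *)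

(* Defs.v *)
From mathcomp Require Import all_boot all_order all_algebra.
Set Implicit Arguments. Unset Strict Implicit. Unset Printing Implicit Defensive.
Import Order.TTheory GRing.Theory Num.Theory.
Local Open Scope ring_scope.

(* An ordinal objective on n elements with K categories eta_1 < ... < eta_K:
   categories are represented by 'I_K (index k-1 for eta_k), and the
   assignment is o : 'I_n -> 'I_K.  The cost matrix C in {0,1}^{K x n} has
   C j i = 1 iff j <= k where o i = eta_k, i.e. (0-indexed) iff j <= o i. *)
Definition cost_matrix (n K : nat) (o : 'I_n -> 'I_K) : 'M[int]_(K, n) :=
  \matrix_(j < K, i < n) (if (j <= o i)%N then 1 else 0).

Definition totally_unimodular (m p : nat) (A : 'M[int]_(m, p)) : Prop :=
  forall (k : nat) (f : 'I_k -> 'I_m) (g : 'I_k -> 'I_p),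
    injective f -> injective g ->
    \det (\matrix_(a < k, b < k) A (f a) (g b)) \in [:: -1; 0; 1].

Definition stacked_matrix (n Kt Kh : nat) (alpha beta : int)
  (Ct : 'M[int]_(Kt, n)) (Ch : 'M[int]_(Kh, n)) : 'M[int]_(Kt + (1 + Kh), n) :=
  col_mx (alpha *: Ct) (col_mx (const_mx 1) (beta *: Ch)).

(* Main.v *)
Require Import Defs.
From mathcomp Require Import all_boot all_order all_algebra.
From mathcomp Require Import zify.
Set Implicit Arguments. Unset Strict Implicit. Unset Printing Implicit Defensive.
Import Order.TTheory GRing.Theory Num.Theory.
Local Open Scope ring_scope.

Definition S3 : seq int := [:: -1; 0; 1].

Lemma S3M (x y : int) : x \in S3 -> y \in S3 -> x * y \in S3.
Proof. by rewrite !inE => /or3P[]/eqP-> /or3P[]/eqP->. Qed.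

Lemma S3sign (n : nat) : (-1) ^+ n \in S3.
Proof. by rewrite -signr_odd; case: odd. Qed.

Definition imx k (h a b : 'I_k -> nat) : 'M[int]_k :=
  \matrix_(i, j) ((a j <= h i)%N && (h i < b j)%N)%:R.

Lemma imx_det k (h a b : 'I_k -> nat) : \det (imx h a b) \in S3.
Proof.
elim: k h a b => [|k IH] h a b; first by rewrite det_mx00.
have [r0 _ Hr0] := arg_minnP h (isT : predT ord0).
pose P j := ((a j <= h r0)%N && (h r0 < b j)%N).
case: (boolP [exists j, P j]) => [/existsP[j0 Pj0]|/existsPn noP]; last first.
  rewrite (expand_det_row _ r0) big1 // => j _.
  by rewrite mxE; move: (noP j); rewrite /P => /negbTE ->; rewrite mul0r.
have [c0 Pc0 Hmin] := arg_minnP b Pj0.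
pose a' j := if (j != c0) && P j then b c0 else a j.
pose N : 'M[int]_k.+1 := \matrix_(r, c) ((r == c0) && ((c != c0) && P c))%:R.
have E : imx h a b *m (1%:M - N) = imx h a' b.
  rewrite mulmxBr mulmx1; apply/matrixP => i j; rewrite !mxE.
  rewrite (bigD1 c0) //= big1 => [|r /negPf Hr]; last by rewrite /N !mxE Hr mulr0.
  rewrite /N !mxE eqxx /= addr0 /a'.
  case Hj: ((j != c0) && P j); last by rewrite mulr0 subr0.
  rewrite mulr1.
  move: Hj => /andP[_ /andP[Ha Hb]].
  move: Pc0 => /andP[Ha0 Hb0].
  have Hm := Hmin j (introT andP (conj Ha Hb)).
  have Hi := Hr0 i isT.
  rewrite (leq_trans Ha Hi) (leq_trans Ha0 Hi) /=.
  case: (ltnP (h i) (b c0)) => H1; case: (ltnP (h i) (b j)) => H2 /=;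
    try by rewrite ?subrr ?subr0.
  lia.
have detU : \det (1%:M - N) = 1.
  rewrite (expand_det_col _ c0) (bigD1 c0) //= big1 => [|r /negPf Hr]; last first.
    by rewrite /N !mxE Hr eqxx /= subr0 mul0r.
  rewrite /N !mxE eqxx /= subr0 mul1r /cofactor addnn -signr_odd odd_double expr0 mul1r.
  have -> : row' c0 (col' c0 (1%:M - N)) = 1%:M.
    apply/matrixP => i j; rewrite /N !mxE (inj_eq (@lift_inj _ c0)).
    case: (lift c0 i =P c0) => [El|_]; last by rewrite subr0.
    by move: (neq_lift c0 i); rewrite El eqxx.
  by rewrite det1.
have -> : \det (imx h a b) = \det (imx h a' b).
  by rewrite -E det_mulmx detU mulr1.
rewrite (expand_det_row _ r0) (bigD1 c0) //= big1 => [|j Hj]; last first.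
  rewrite mxE /a' Hj /=.
  case HP: (P j) => /=.
    by rewrite leqNgt (andP Pc0).2 mul0r.
  by move: HP; rewrite /P => ->; rewrite mul0r.
rewrite addr0 mxE /a' eqxx /=.
move: (Pc0); rewrite /P => ->; rewrite mul1r /cofactor.
apply: S3M; first exact: S3sign.
have -> : row' r0 (col' c0 (imx h a' b)) =
  imx (fun i => h (lift r0 i)) (fun j => a' (lift c0 j)) (fun j => b (lift c0 j)).
  by apply/matrixP => i j; rewrite !mxE.
exact: IH.
Qed.

Theorem corollary2 (n Kt Kh : nat) (ot : 'I_n -> 'I_Kt) (oh : 'I_n -> 'I_Kh)
  (alpha beta : int) :
  alpha \in [:: -1; 0; 1] -> beta \in [:: -1; 0; 1] ->
  totally_unimodular
    (stacked_matrix alpha beta (cost_matrix ot) (cost_matrix oh)).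
Proof.
move=> Ha Hb k f g _ _.
pose s (x : 'I_(Kt + (1 + Kh))) : int :=
  match split x with inl _ => alpha | inr y =>
    match split y with inl _ => 1 | inr _ => beta end end.
pose hh (x : 'I_(Kt + (1 + Kh))) : nat :=
  match split x with inl j => (Kt.-1 - j)%N | inr y =>
    match split y with inl _ => Kt | inr j => (Kt + 1 + j)%N end end.
pose aa (c : 'I_n) := (Kt.-1 - ot c)%N.
pose bb (c : 'I_n) := (Kt + 2 + oh c)%N.
have entry : forall x c,
  stacked_matrix alpha beta (cost_matrix ot) (cost_matrix oh) x c =
  s x * ((aa c <= hh x)%N && (hh x < bb c)%N)%:R.
  move=> x c; rewrite /stacked_matrix /s /hh /aa /bb.
  case: splitP => [j Hj|y Hy].
    have -> : x = lshift _ j by apply: val_inj.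
    rewrite col_mxEu !mxE.
    have Hot := ltn_ord (ot c); have Hjl := ltn_ord j.
    have -> : (Kt.-1 - ot c <= Kt.-1 - j)%N = (j <= ot c)%N by apply/idP/idP; lia.
    have -> : (Kt.-1 - j < Kt + 2 + oh c)%N by lia.
    by rewrite andbT; case: (j <= ot c)%N; rewrite ?mulr1 ?mulr0.
  have -> : x = rshift _ y by apply: val_inj.
  rewrite col_mxEd.
  case: splitP => [z Hz|w Hw].
    have -> : y = lshift _ z by apply: val_inj.
    rewrite col_mxEu !mxE.
    have -> : (Kt.-1 - ot c <= Kt)%N by lia.
    by have -> : (Kt < Kt + 2 + oh c)%N by lia.
  have -> : y = rshift _ w by apply: val_inj.
  rewrite col_mxEd !mxE.
  have Hw' := ltn_ord w.
  have -> : (Kt.-1 - ot c <= Kt + 1 + w)%N by lia.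
  have -> : (Kt + 1 + w < Kt + 2 + oh c)%N = (w <= oh c)%N by apply/idP/idP; lia.
  by case: (w <= oh c)%N; rewrite ?mulr1 ?mulr0.
have -> : \matrix_(a0 < k, b0 < k)
    stacked_matrix alpha beta (cost_matrix ot) (cost_matrix oh) (f a0) (g b0)
  = diag_mx (\row_i s (f i)) *m imx (fun i => hh (f i)) (fun j => aa (g j)) (fun j => bb (g j)).
  by rewrite mul_diag_mx; apply/matrixP => i j; rewrite [LHS]mxE entry !mxE.
rewrite det_mulmx det_diag; apply: S3M; last exact: imx_det.
apply: (big_ind (fun x => x \in S3)) => //; first exact: S3M.
move=> i _; rewrite mxE /s.
case: split => // y; case: split => //.
Qed.
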